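(* Let $p$ be a prime and $n,r\geq 0$ integers. Then $B_{n+p^r,-r}\equiv B_{n,-r+1}\pmod p$.
   Context: For any integer $s\in\mathbb{Z}$, the $s$-Bell numbers $B_{n,s}$ ($n\geq0$) are defined by $\sum_{n\geq0}B_{n,s}\frac{t^n}{n!}=e^{e^t-1+st}$. *)

(* Defs.v *)
(* s-Bell numbers via their exponential generating function,
   computed with formal power series truncated (as polynomials over rat). *)
From mathcomp Require Import all_boot all_algebra.
Set Implicit Arguments. Unset Strict Implicit. Unset Printing Implicit Defensive.
Import GRing.Theory Num.Theory.
Local Open Scope ring_scope.

Definition expm1_trunc (n : nat) : {poly rat} :=
  \sum_(1 <= j < n.+1) ((j`!)%:R^-1 : rat) *: 'X^j.

(* exp(f) = \sum_k f^k / k!, truncated; for f with zero constant term its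
   coefficients of degree <= n are exact. *)
Definition exp_trunc (n : nat) (f : {poly rat}) : {poly rat} :=
  \sum_(k < n.+1) ((k`!)%:R^-1 : rat) *: f ^+ k.

Definition sBell (n : nat) (s : int) : rat :=
  (n`!)%:R * (exp_trunc n (expm1_trunc n + (s%:~R : rat) *: 'X))`_n.

(* Main.v *)
Require Import Defs.
From mathcomp Require Import all_boot all_algebra all_field.
From mathcomp Require Import ring.
Set Implicit Arguments. Unset Strict Implicit. Unset Printing Implicit Defensive.
Import GRing.Theory Num.Theory.
Local Open Scope ring_scope.

Section Umbral.
Variable R : comNzRingType.
Variable b : nat -> R.

Definition Lf (q : {poly R}) : R := \sum_(i < size q) q`_i * b i.

Lemma LfE N (q : {poly R}) : (size q <= N)%N -> Lf q = \sum_(i < N) q`_i * b i.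
Proof.
move=> hN; rewrite /Lf (big_ord_widen N (fun i => q`_i * b i) hN).
rewrite [RHS](bigID (fun i : 'I_N => (i < size q)%N)) /=.
rewrite [X in _ = _ + X]big1 ?addr0 // => i; rewrite -leqNgt => hi.
by rewrite nth_default // mul0r.
Qed.

Lemma LfD q1 q2 : Lf (q1 + q2) = Lf q1 + Lf q2.
Proof.
set N := maxn (size q1) (size q2).
rewrite (@LfE N) ?(leq_trans (size_polyD _ _)) //.
rewrite (@LfE N q1) ?leq_maxl // (@LfE N q2) ?leq_maxr // -big_split /=.
by apply: eq_bigr => i _; rewrite coefD mulrDl.
Qed.

Lemma Lf0 : Lf 0 = 0.
Proof. by rewrite /Lf size_poly0 big_ord0. Qed.

Lemma LfZ c q : Lf (c *: q) = c * Lf q.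
Proof.
rewrite (@LfE (size q)) ?size_scale_leq // /Lf mulr_sumr.
by apply: eq_bigr => i _; rewrite coefZ mulrA.
Qed.

Lemma LfN q : Lf (- q) = - Lf q.
Proof. by rewrite -scaleN1r LfZ mulN1r. Qed.

Lemma LfB q1 q2 : Lf (q1 - q2) = Lf q1 - Lf q2.
Proof. by rewrite LfD LfN. Qed.

Lemma Lf_sum I (r : seq I) (P : pred I) (F : I -> {poly R}) :
  Lf (\sum_(i <- r | P i) F i) = \sum_(i <- r | P i) Lf (F i).
Proof. exact: (big_morph Lf LfD Lf0). Qed.

Lemma LfMn q k : Lf (q *+ k) = Lf q *+ k.
Proof. by elim: k => [|k IH]; rewrite ?mulr0n ?Lf0 // !mulrS LfD IH. Qed.

Lemma LfXn k : Lf 'X^k = b k.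
Proof.
rewrite (@LfE k.+1) ?size_polyXn // (bigD1 ord_max) //= coefXn eqxx mul1r.
rewrite big1 ?addr0 // => i hi; rewrite coefXn.
case: eqP => [hik|]; last by rewrite mul0r.
by case/eqP: hi; apply: val_inj; rewrite /= hik.
Qed.

Lemma poly_decomp (q : {poly R}) : q = \sum_(i < size q) q`_i *: 'X^i.
Proof. by rewrite -poly_def coefK. Qed.

Hypothesis brec : forall k, b k.+1 = \sum_(j < k.+1) b (k - j)%N *+ 'C(k, j).

Lemma Lf_shift q : Lf ('X * q) = Lf (q \Po ('X + 1)).
Proof.
have qd := poly_decomp q; rewrite [in LHS]qd [in RHS]qd mulr_sumr Lf_sum.
rewrite raddf_sum /= Lf_sum; apply: eq_bigr => i _.
rewrite -scalerAr LfZ -exprS LfXn comp_polyZ LfZ; congr (_ * _).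
rewrite rmorphXn /= comp_polyX exprDn Lf_sum brec; apply: eq_bigr => j _.
by rewrite expr1n mulr1 LfMn LfXn.
Qed.

Definition Cs (c : R) (m : nat) := Lf (('X + c%:P) ^+ m).

Lemma Cs0 c : Cs c 0 = b 0.
Proof. by rewrite /Cs expr0 -(expr0 'X) LfXn. Qed.

Lemma Cs_rec c n :
  Cs c n.+1 = \sum_(j < n.+1) Cs c (n - j)%N *+ 'C(n, j) + c * Cs c n.
Proof.
rewrite /Cs exprS mulrDl LfD mul_polyC LfZ Lf_shift; congr (_ + _).
rewrite rmorphXn rmorphD /= comp_polyX comp_polyC addrAC exprDn Lf_sum.
by apply: eq_bigr => j _; rewrite expr1n mulr1 LfMn.
Qed.

End Umbral.


Section Fp.
Variable p : nat.
Hypothesis hp : prime p.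
Variable b : nat -> 'F_p.
Hypothesis brec : forall k, b k.+1 = \sum_(j < k.+1) b (k - j)%N *+ 'C(k, j).

Local Notation Lf := (Lf b).

Definition ffp k : {poly 'F_p} := \prod_(i < k) ('X - (i%:R)%:P).

Lemma Lf_ff k q : Lf (ffp k * q) = Lf (q \Po ('X + (k%:R)%:P)).
Proof.
elim: k q => [|k IH] q.
  by rewrite /ffp big_ord0 mul1r polyC0 addr0 comp_polyXr.
rewrite /ffp big_ord_recl /= polyC0 subr0 -mulrA (Lf_shift brec).
rewrite comp_polyM rmorph_prod /=.
rewrite (eq_bigr (fun i : 'I_k => 'X - (i%:R)%:P)); last first.
  move=> i _; rewrite comp_polyB comp_polyX comp_polyC /bump /= add1n.
  rewrite mulrSr polyCD polyC1; ring.
rewrite -/(ffp k) IH -comp_polyA comp_polyD comp_polyX comp_polyC.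
by rewrite mulrSr polyCD polyC1 addrA.
Qed.

Lemma ffpE : ffp p = 'X^p - 'X.
Proof.
rewrite /ffp.
have h := finField_genPoly 'F_p; rewrite card_Fp // in h; rewrite h.
set s := [seq (i%:R : 'F_p) | i <- iota 0 p].
have us : uniq s.
  rewrite map_inj_in_uniq ?iota_uniq // => i j; rewrite !mem_iota /= !add0n => hi hj hij.
  by have := val_Fp_nat hp i; rewrite hij val_Fp_nat // !modn_small.
have ms : forall x, x \in s.
  move=> x; apply/mapP; exists (val x); last by rewrite natr_Zp.
  by rewrite mem_iota /= add0n -{2}(Fp_cast hp) ltn_ord.
rewrite -(eq_bigl _ _ ms) -big_uniq // big_map.
by rewrite -(big_mkord xpredT (fun i : nat => 'X - (i%:R : 'F_p)%:P)) /index_iota subn0.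
Qed.

Definition gg : {poly 'F_p} := 'X^p - 'X - 1.

Lemma touchard q : Lf (q * gg) = 0.
Proof.
have h := Lf_ff p q; rewrite ffpE pchar_Fp_0 // polyC0 addr0 comp_polyXr in h.
by rewrite /gg mulrBr mulr1 mulrC LfB h subrr.
Qed.

Lemma Lf_cong q a1 a2 c : a1 - a2 = c * gg -> Lf (q * a1) = Lf (q * a2).
Proof.
move=> h; apply/eqP; rewrite -subr_eq0 -LfB -mulrBr h mulrA touchard //.
Qed.

Lemma pcharP : p \in [pchar {poly 'F_p}].
Proof. by rewrite pchar_poly; exact: pchar_Fp. Qed.

Lemma frobD m (x y : {poly 'F_p}) : (x + y) ^+ (p ^ m) = x ^+ (p ^ m) + y ^+ (p ^ m).
Proof.
apply: exprDn_pchar; rewrite (eq_pnat _ (pcharf_eq pcharP)) pnatX pnat_id //.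
Qed.

Lemma fermat m (x : 'F_p) : x ^+ (p ^ m) = x.
Proof.
elim: m => [|m IH]; first by rewrite expn0 expr1.
by rewrite expnSr exprM IH; have := expf_card x; rewrite card_Fp.
Qed.

Lemma frob1 (x y : {poly 'F_p}) : (x + y) ^+ p = x ^+ p + y ^+ p.
Proof. by have := frobD 1 x y; rewrite expn1. Qed.

Lemma fermat1 (x : 'F_p) : x ^+ p = x.
Proof. by have := fermat 1 x; rewrite expn1. Qed.

Lemma XpowE m : exists c, 'X^(p ^ m) - ('X + (m%:R)%:P) = c * gg.
Proof.
elim: m => [|m [c hc]]; first by exists 0; rewrite expn0 expr1 polyC0 addr0 subrr mul0r.
have hX : 'X^p = gg + 'X + 1 by rewrite /gg; ring.
exists (1 + c ^+ p * gg ^+ p.-1).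
have e1 : 'X^(p ^ m) = 'X + (m%:R)%:P + c * gg by rewrite -hc; ring.
rewrite expnSr exprM e1 !frob1 -rmorphXn /= fermat1.
have hg : gg ^+ p = gg ^+ p.-1 * gg by rewrite -exprSr prednK // prime_gt0.
rewrite hX exprMn hg.
rewrite mulrSr polyCD polyC1; ring.
Qed.

Lemma key r n : Cs b (- (r%:R)) (n + p ^ r) = Cs b (- (r%:R) + 1) n.
Proof.
rewrite /Cs exprD frobD -rmorphXn fermat /=.
have [c hc] := XpowE r.
rewrite (@Lf_cong _ _ 'X c); last by rewrite -hc polyCN; ring.
rewrite mulrC (Lf_shift brec) rmorphXn rmorphD /= comp_polyX comp_polyC.
by rewrite polyCD polyC1 addrA addrAC.
Qed.

End Fp.
Section EGF.
Variable N : nat.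
Variable c : rat.

Definition ff := expm1_trunc N + c *: 'X.
Definition FF := exp_trunc N ff.
Definition AA m := (m`!)%:R * FF`_m.
Definition hh : {poly rat} := \poly_(j < N) (((j.+1)`!)%:R^-1 : rat) + c%:P.

Lemma ffE : ff = 'X * hh.
Proof.
rewrite /ff /hh /expm1_trunc mulrDr poly_def big_add1 /= big_mkord mulr_sumr.
congr (_ + _); last by rewrite -mul_polyC mulrC.
by apply: eq_bigr => j _; rewrite exprS scalerAr.
Qed.

Lemma factinv j : ((j.+1)`!%:R : rat)^-1 *+ j.+1 = (j`!%:R)^-1.
Proof.
rewrite -(mulr_natr ((j.+1)`!%:R)^-1) factS natrM invfM mulrAC mulVf ?mul1r //.
by rewrite pnatr_eq0.
Qed.

Lemma coef_dff i : (i < N)%N -> ff^`()`_i = (i`!%:R)^-1 + (if i == 0%N then c else 0).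
Proof.
move=> hi; rewrite coef_deriv ffE coefXM /= /hh coefD coef_poly hi coefC.
rewrite mulrnDl factinv; congr (_ + _).
by case: (i =P 0%N) => [->|]; rewrite ?mul0rn.
Qed.

Lemma coef_ffpow k i : (i < k)%N -> (ff ^+ k)`_i = 0.
Proof. by move=> hi; rewrite ffE exprMn coefXnM hi. Qed.

Lemma dFF : FF^`() = ff^`() * (FF - ((N`!)%:R^-1 : rat) *: ff ^+ N).
Proof.
rewrite /FF /exp_trunc [in RHS]big_ord_recr /= addrK.
rewrite (raddf_sum (@deriv rat)) /= big_ord_recl /=.
rewrite derivZ expr0 derivC scaler0 add0r mulr_sumr; apply: eq_bigr => j _.
rewrite derivZ deriv_exp /= add0n /bump /= add1n.
by rewrite -scalerMnr scalerMnl factinv scalerAr.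
Qed.

Lemma AA_rec n : (n < N)%N ->
  AA n.+1 = \sum_(j < n.+1) AA (n - j)%N *+ 'C(n, j) + c * AA n.
Proof.
move=> hn.
have h1 : FF`_n.+1 *+ n.+1 = \sum_(j < n.+1) ff^`()`_j * FF`_(n - j)%N.
  rewrite -coef_deriv dFF mulrBr coefB -scalerAr coefZ [X in _ - _ * X]coefM.
  rewrite [X in _ - _ * X]big1 ?mulr0 ?subr0 ?coefM // => j _.
  by rewrite coef_ffpow ?mulr0 // (leq_ltn_trans (leq_subr j n) hn).
have h2 : AA n.+1 = n`!%:R * (FF`_n.+1 *+ n.+1).
  by rewrite /AA factS natrM -(mulr_natl (FF`_n.+1)) mulrA [_ * n`!%:R]mulrC.
rewrite h2 h1 mulr_sumr.
rewrite (eq_bigr (fun j : 'I_n.+1 => AA (n - j)%N *+ 'C(n, j) +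
    (if j == 0%N :> nat then c * AA n else 0))); last first.
  move=> j _; rewrite coef_dff; last by rewrite (leq_ltn_trans _ hn) // -ltnS.
  rewrite mulrDl mulrDr; congr (_ + _).
    rewrite /AA -(bin_fact (ltnSE (ltn_ord j))) !natrM mulrA mulrAC -!mulrA.
    rewrite mulVKf ?pnatr_eq0 -?lt0n ?fact_gt0 //.
    by rewrite mulr_natl mulrC !mulr_natr.
  case: (j =P 0%N :> nat) => [->|]; last by rewrite mul0r mulr0.
  by rewrite subn0 /AA mulrCA.
rewrite big_split /=; congr (_ + _).
by rewrite big_ord_recl /= big1 ?addr0 // => j _.
Qed.

Lemma AA0 : AA 0 = 1.
Proof.
rewrite /AA /FF /exp_trunc mul1r coef_sum big_ord_recl /= expr0 coefZ coef1 /=.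
rewrite invr1 mulr1 big1 ?addr0 // => j _.
by rewrite coefZ coef_ffpow ?mulr0.
Qed.

Lemma AA_uniq (u : nat -> rat) : u 0%N = 1 ->
  (forall n, u n.+1 = \sum_(j < n.+1) u (n - j)%N *+ 'C(n, j) + c * u n) ->
  forall m, (m <= N)%N -> AA m = u m.
Proof.
move=> u0 urec m; elim: m {-2}m (leqnn m) => [|m IH] k hk hkN.
  by move: hk; rewrite leqn0 => /eqP ->; rewrite AA0 u0.
case: (ltngtP k m.+1) hk => [hlt _|hgt|hk]; first by apply: IH.
  by [].
move=> _; subst k; rewrite AA_rec // urec; congr (_ + _ * _); last by apply: IH => //; apply: ltnW.
apply: eq_bigr => j _; congr (_ *+ _); apply: IH; first by rewrite leq_subr.
by rewrite (leq_trans (leq_subr _ _)) // ltnW.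
Qed.

End EGF.

Section Main.

Lemma Lf_map (R S : comNzRingType) (f : {rmorphism R -> S}) (b : nat -> R) q :
  f (Lf b q) = Lf (f \o b) (map_poly f q).
Proof.
rewrite [RHS](@LfE _ _ (size q)); last exact: size_poly.
rewrite /Lf rmorph_sum; apply: eq_bigr => i _.
by rewrite rmorphM coef_map.
Qed.

Lemma Cs_map (R S : comNzRingType) (f : {rmorphism R -> S}) (b : nat -> R) c m :
  f (Cs b c m) = Cs (f \o b) (f c) m.
Proof. by rewrite /Cs Lf_map rmorphXn /= map_polyXaddC. Qed.

Lemma brec_map (R S : comNzRingType) (f : {rmorphism R -> S}) (b : nat -> R) :
  (forall k, b k.+1 = \sum_(j < k.+1) b (k - j)%N *+ 'C(k, j)) ->
  (forall k, (f \o b) k.+1 = \sum_(j < k.+1) (f \o b) (k - j)%N *+ 'C(k, j)).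
Proof.
move=> h k; rewrite /= h rmorph_sum; apply: eq_bigr => j _.
by rewrite rmorphMn.
Qed.

Fixpoint blist (n : nat) : seq int :=
  if n is m.+1 then
    rcons (blist m) (\sum_(j < m.+1) nth 0 (blist m) (m - j)%N *+ 'C(m, j))
  else [:: 1].

Definition bz n := nth 0 (blist n) n.

Lemma size_blist n : size (blist n) = n.+1.
Proof. by elim: n => //= n IH; rewrite size_rcons IH. Qed.

Lemma nth_blist n i : (i <= n)%N -> nth 0 (blist n) i = bz i.
Proof.
elim: n => [|n IH] hi; first by move: hi; rewrite leqn0 => /eqP ->.
case: (ltngtP i n.+1) hi => [hlt _|hgt|->] //=.
by rewrite nth_rcons size_blist hlt IH.
Qed.

Lemma bz_rec k : bz k.+1 = \sum_(j < k.+1) bz (k - j)%N *+ 'C(k, j).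
Proof.
rewrite /bz /= nth_rcons size_blist ltnn eqxx.
by apply: eq_bigr => j _; rewrite nth_blist // leq_subr.
Qed.

Lemma bz0 : bz 0 = 1.
Proof. by []. Qed.

Lemma sBell_Cs m (s : int) : sBell m s = (Cs bz s m)%:~R.
Proof.
rewrite (Cs_map (intr : int -> rat)).
have := @AA_uniq m (s%:~R) (Cs (intr \o bz) (s%:~R)).
rewrite /AA /FF /ff /sBell => -> //.
- by rewrite Cs0 /= bz0.
- move=> n; apply: Cs_rec; exact: (brec_map _ bz_rec).
Qed.

End Main.

Theorem proposition1 (p n r : nat) (hp : prime p) :
  exists k : int,
    sBell (n + p ^ r) (- (r%:Z)) - sBell n (- (r%:Z) + 1) = ((p%:Z * k)%:~R : rat).
Proof.
rewrite !sBell_Cs -rmorphB.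
set z := _ - _.
suff hz : (p%:Z %| z)%Z.
  by exists (z %/ p%:Z)%Z; rewrite mulrC divzK.
have h0 : (z%:~R : 'F_p) = 0.
  rewrite /z rmorphB /= !(Cs_map (intr : int -> 'F_p)) /= rmorphD rmorphN /= rmorph1.
  have er : ((r%:Z)%:~R : 'F_p) = r%:R by [].
  rewrite !rmorphN /= er (key hp (brec_map (intr : int -> 'F_p) bz_rec)).
  by rewrite subrr.
move: h0; case: z => m.
  move=> h; rewrite dvdzE /= (dvdn_pcharf (pchar_Fp hp)); apply/eqP; exact: h.
rewrite NegzE rmorphN /= => /eqP; rewrite oppr_eq0 => /eqP h.
by rewrite dvdzE /= (dvdn_pcharf (pchar_Fp hp)); apply/eqP; exact: h.
Qed.
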